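(* Fix $\gamma>-1$. Then for every $f\in C^\infty(\mathbb D_E)$ and $(\beta,a)\in\mathbb S^1\times\mathbb R$, $$I_0^H\big(x^{2+2\gamma}\,(f\circ\Phi)\big)(\beta,a)=\mu_H(a)\,\big(I_0^E(d^\gamma f)\big)(\beta,\tan^{-1}a).$$
   Context: $\mathbb D_E=\mathbb D_H=\{|z|\le1\}$; $\Phi\colon\mathbb D_H\to\mathbb D_E$, $\Phi(z)=\frac{2z}{1+|z|^2}$; $x(z)=\frac{1-|z|^2}{1+|z|^2}$; $d(z)=1-|z|^2$; $\mu_H(a)=(1+a^2)^{-1/2}$. Hyperbolic X-ray transform: $I_0^Hh(\beta,a)=\int_{\mathbb R}h(\gamma_{\beta,a}(t))dt$ with $\gamma_{\beta,a}(t)=e^{i\beta}\frac{(2+ia)\tanh(t/2)+ia}{ia\tanh(t/2)-2+ia}$. Euclidean X-ray transform in fan-beam coordinates: $I_0^Eg(\beta,\alpha)=\int_{-\cos\alpha}^{\cos\alpha}g\big(e^{i(\beta+\alpha+\pi)}(u+i\sin\alpha)\big)du$, $(\beta,\alpha)\in\mathbb S^1\times[-\pi/2,\pi/2]$. *)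

(* Defs.v *)
From Stdlib Require Import Reals.
From Coquelicot Require Import Coquelicot.
Open Scope R_scope.

Definition cis (th : R) : C := (cos th, sin th).

Definition tanhR (t : R) : R := (exp t - exp (- t)) / (exp t + exp (- t)).

Definition Phi (z : C) : C := Cmult (RtoC (2 / (1 + Cmod z ^ 2))) z.

Definition xfun (z : C) : R := (1 - Cmod z ^ 2) / (1 + Cmod z ^ 2).

Definition dfun (z : C) : R := 1 - Cmod z ^ 2.

Definition muH (a : R) : R := / sqrt (1 + a ^ 2).

Definition gammaH (beta a t : R) : C :=
  Cmult (cis beta)
    (Cdiv (Cplus (Cmult (2, a) (RtoC (tanhR (t / 2)))) (0, a))
          (Cplus (Cmult (0, a) (RtoC (tanhR (t / 2)))) (-2, a))).

Definition lineE (beta alpha u : R) : C :=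
  Cmult (cis (beta + alpha + PI)) (u, sin alpha).

(* Hyperbolic X-ray transform: I_0^H h (beta,a) = L means the improper
   integral over R of h(gamma_{beta,a}(t)) converges to L. *)
Definition is_I0H (h : C -> C) (beta a : R) (L : C) : Prop :=
  is_RInt_gen (fun t => h (gammaH beta a t))
    (Rbar_locally m_infty) (Rbar_locally p_infty) L.

(* Euclidean X-ray transform: I_0^E g (beta,alpha) = L means the (possibly
   improper at the endpoints) integral over (-cos alpha, cos alpha) of
   g(e^{i(beta+alpha+pi)}(u + i sin alpha)) converges to L. *)
Definition is_I0E (g : C -> C) (beta alpha : R) (L : C) : Prop :=
  is_RInt_gen (fun u => g (lineE beta alpha u))
    (at_right (- cos alpha)) (at_left (cos alpha)) L.

Definition dx (h : C -> R) (z : C) : R := Derive (fun t => h (Cplus z (t, 0))) 0.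
Definition dy (h : C -> R) (z : C) : R := Derive (fun t => h (Cplus z (0, t))) 0.

Fixpoint Ck (k : nat) (U : C -> Prop) (h : C -> R) : Prop :=
  match k with
  | O => forall z, U z -> continuous h z
  | S k' => (forall z, U z -> continuous h z) /\
            (forall z, U z -> ex_derive (fun t => h (Cplus z (t, 0))) 0 /\
                              ex_derive (fun t => h (Cplus z (0, t))) 0) /\
            Ck k' U (dx h) /\ Ck k' U (dy h)
  end.

Definition smooth_on (U : C -> Prop) (h : C -> R) : Prop := forall k, Ck k U h.

(* f in C^infty(D_E), D_E the closed unit disk: f (complex valued) is the
   restriction of a function that is smooth on an open neighbourhood of D_E. *)
Definition smooth_closed_disk (f : C -> C) : Prop :=
  exists U : C -> Prop, open U /\ (forall z, Cmod z <= 1 -> U z) /\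
    smooth_on U (fun z => fst (f z)) /\ smooth_on U (fun z => snd (f z)).

(* Main.v *)
Require Import Defs.
From Stdlib Require Import Reals Lra Psatz FunctionalExtensionality.
From Coquelicot Require Import Coquelicot.
Open Scope R_scope.

Lemma RInt_norm_le_prim {V : CompleteNormedModule R_AbsRing} (h : R -> V) (H dH : R -> R) :
  (forall t, continuous h t) -> (forall t, is_derive H t (dH t)) -> (forall t, continuous dH t) ->
  (forall t, norm (h t) <= dH t) ->
  forall x y, norm (RInt h x y) <= Rabs (H y - H x).
Proof.
  intros hc hd hdc hb.
  assert (key : forall x y, x <= y -> norm (RInt h x y) <= Rabs (H y - H x)).
  { intros x y hxy.
    eapply Rle_trans; [| apply Rle_abs].
    apply (norm_RInt_le h dH x y (RInt h x y) (H y - H x) hxy).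
    - intros; apply hb.
    - apply RInt_correct, ex_RInt_continuous; intros; apply hc.
    - apply (is_RInt_derive H dH x y); intros; auto. }
  intros x y. destruct (Rle_or_lt x y) as [hxy|hxy].
  - now apply key.
  - rewrite <- opp_RInt_swap by (apply ex_RInt_continuous; intros; apply hc).
    replace (norm (opp (RInt h y x))) with (norm (RInt h y x)) by (symmetry; exact (@norm_opp R_AbsRing (CompleteNormedModule.NormedModule R_AbsRing V) _)).
    rewrite Rabs_minus_sym. apply key. lra.
Qed.

Lemma ex_gen_dom (h : R -> C) (H dH : R -> R) lm lp :
  (forall t, continuous h t) -> (forall t, is_derive H t (dH t)) -> (forall t, continuous dH t) ->
  (forall t, Cmod (h t) <= dH t) ->
  filterlim H (Rbar_locally m_infty) (locally lm) ->
  filterlim H (Rbar_locally p_infty) (locally lp) ->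
  exists L, is_RInt_gen h (Rbar_locally m_infty) (Rbar_locally p_infty) L.
Proof.
  intros hc hd hdc hb0 hm hp.
  assert (hb : forall t, @norm R_AbsRing C_R_CompleteNormedModule (h t) <= dH t)
    by (intros; rewrite <- Cmod_norm; apply hb0).
  pose proof (@RInt_norm_le_prim C_R_CompleteNormedModule h H dH hc hd hdc hb) as hn.
  assert (exR : forall x y, @ex_RInt C_R_NormedModule h x y) by (intros; apply (@ex_RInt_continuous C_R_CompleteNormedModule); intros; apply hc).
  set (Fn := fun xy : R * R => @RInt C_R_CompleteNormedModule h (fst xy) (snd xy)).
  assert (hcau : exists L, filterlim Fn (filter_prod (Rbar_locally m_infty) (Rbar_locally p_infty)) (locally L)).
  { apply filterlim_locally_cauchy.
    intros eps.
    assert (he4 : 0 < eps / 4) by (destruct eps; simpl; lra).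
    exists (fun xy : R * R => ball lm (mkposreal _ he4) (H (fst xy)) /\ ball lp (mkposreal _ he4) (H (snd xy))).
    split.
    - apply (Filter_prod _ _ _ (fun x => ball lm (mkposreal _ he4) (H x)) (fun x => ball lp (mkposreal _ he4) (H x))).
      + apply hm. apply locally_ball.
      + apply hp. apply locally_ball.
      + intros x y h1 h2; simpl; auto.
    - intros [u1 u2] [v1 v2] [hu1 hu2] [hv1 hv2]. simpl in *.
      refine (@norm_compat1 R_AbsRing (CompleteNormedModule.NormedModule R_AbsRing C_R_CompleteNormedModule) _ _ _ _). unfold Fn; simpl.
      rewrite <- (@RInt_Chasles C_R_CompleteNormedModule h v1 u1 v2) by auto.
      rewrite <- (@RInt_Chasles C_R_CompleteNormedModule h u1 u2 v2) by auto.
      match goal with |- norm (minus (plus ?A (plus ?B ?Cc)) ?B') < _ =>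
        apply Rle_lt_trans with (norm (plus A Cc));
        [right; apply f_equal; destruct A as [a1 a2], B as [b1 b2], Cc as [c1 c2];
           unfold minus, plus, opp; simpl;
           unfold prod_plus, prod_opp; simpl; unfold plus, opp; simpl; f_equal; ring |] end.
      eapply Rle_lt_trans; [exact (@norm_triangle _ (CompleteNormedModule.NormedModule R_AbsRing C_R_CompleteNormedModule) _ _)|].
      eapply Rle_lt_trans; [apply Rplus_le_compat; apply hn|].
      unfold ball in hu1, hu2, hv1, hv2; simpl in *.
      unfold AbsRing_ball, abs, minus, plus, opp in *; simpl in *.
      destruct eps as [e he]; simpl in *.
      assert (Rabs (H u1 - H v1) < e/2).
      { replace (H u1 - H v1) with ((H u1 + - lm) - (H v1 + - lm)) by ring.
        eapply Rle_lt_trans; [apply Rabs_triang|]. rewrite Rabs_Ropp. lra. }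
      assert (Rabs (H v2 - H u2) < e/2).
      { replace (H v2 - H u2) with ((H v2 + - lp) - (H u2 + - lp)) by ring.
        eapply Rle_lt_trans; [apply Rabs_triang|]. rewrite Rabs_Ropp. lra. }
      lra. }
  destruct hcau as [L hL]. exists L.
  intros P HP. specialize (hL P HP).
  unfold filtermapi. eapply filter_imp; [|exact hL].
  intros [x y] hxy. exists (Fn (x, y)). split; auto.
  apply (@RInt_correct C_R_CompleteNormedModule); auto.
Qed.


Lemma cv_gen (g : R -> C) (phi dphi psi : R -> R) (p q : R) (L : C) :
  p < q ->
  (forall u, p < u < q -> continuous g u) ->
  (forall t, is_derive phi t (dphi t)) -> (forall t, continuous dphi t) ->
  (forall t, p < phi t < q) ->
  (forall u, p < u < q -> phi (psi u) = u) ->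
  filterlim psi (at_right p) (Rbar_locally m_infty) ->
  filterlim psi (at_left q) (Rbar_locally p_infty) ->
  is_RInt_gen (fun t => scal (dphi t) (g (phi t))) (Rbar_locally m_infty) (Rbar_locally p_infty) L ->
  is_RInt_gen g (at_right p) (at_left q) L.
Proof.
  intros hpq hgc hd hdc hph hinv hl1 hl2 hI.
  intros P HP. specialize (hI P HP).
  unfold filtermapi in *.
  destruct hI as [Q1 Q2 HQ1 HQ2 Hqq].
  apply (Filter_prod _ _ _ (fun a => p < a < q /\ Q1 (psi a)) (fun b => p < b < q /\ Q2 (psi b))).
  - apply filter_and.
    + exists (mkposreal _ (proj2 (Rlt_0_minus _ _) hpq)). intros y hy hy'.
      unfold ball in hy; simpl in hy; unfold AbsRing_ball, abs, minus, plus, opp in hy; simpl in hy.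
      apply Rabs_lt_between' in hy. lra.
    + apply hl1. exact HQ1.
  - apply filter_and.
    + exists (mkposreal _ (proj2 (Rlt_0_minus _ _) hpq)). intros y hy hy'.
      unfold ball in hy; simpl in hy; unfold AbsRing_ball, abs, minus, plus, opp in hy; simpl in hy.
      apply Rabs_lt_between' in hy. lra.
    + apply hl2. exact HQ2.
  - intros a b [ha hQa] [hb hQb].
    destruct (Hqq _ _ hQa hQb) as [y [hy hPy]]. simpl in hy.
    exists y. split; [|exact hPy]. simpl.
    assert (hcomp := @is_RInt_comp C_R_CompleteNormedModule g phi dphi (psi a) (psi b)
       (fun x _ => hgc _ (hph x)) (fun x _ => conj (hd x) (hdc x))).
    rewrite (hinv a ha), (hinv b hb) in hcomp.
    assert (E := @is_RInt_unique C_R_CompleteNormedModule _ _ _ _ hy).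
    assert (E2 := @is_RInt_unique C_R_CompleteNormedModule _ _ _ _ hcomp).
    replace y with (@RInt C_R_CompleteNormedModule g a b) by (rewrite <- E2; exact E).
    apply (@RInt_correct C_R_CompleteNormedModule).
    apply (@ex_RInt_continuous C_R_CompleteNormedModule).
    intros z hz. apply hgc.
    destruct (Rle_or_lt a b) as [hab|hab].
    + rewrite Rmin_left, Rmax_right in hz by lra. lra.
    + rewrite Rmin_right, Rmax_left in hz by lra. lra.
Qed.


Lemma tanh_half (t : R) : tanhR (t / 2) = (exp t - 1) / (exp t + 1).
Proof.
  unfold tanhR. set (w := exp (t/2)).
  assert (hw : 0 < w) by apply exp_pos.
  assert (he : exp t = w * w) by (unfold w; rewrite <- exp_plus; f_equal; field).
  rewrite exp_Ropp. fold w. rewrite he. field. split; nra.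
Qed.

Lemma gamma_explicit beta a t :
  let E := exp t in
  let P := 1 - E^2 + a^2 * E^2 in
  let Q := -2 * a * E^2 in
  let Dn := (E + 1)^2 + a^2 * E^2 in
  gammaH beta a t = ((cos beta * P - sin beta * Q) / Dn, (sin beta * P + cos beta * Q) / Dn).
Proof.
  intros E P Q Dn.
  unfold gammaH, cis. rewrite tanh_half. fold E.
  assert (hE : 0 < E) by apply exp_pos.
  unfold Cdiv, Cmult, Cplus, Cinv, RtoC; simpl.
  unfold P, Q, Dn.
  f_equal; field; split; try nra.
Qed.

Lemma Cmod_sq (z : C) : Cmod z ^ 2 = fst z ^ 2 + snd z ^ 2.
Proof. unfold Cmod. rewrite pow2_sqrt; [reflexivity|]. nra. Qed.

Lemma gamma_mod2 beta a t :
  let E := exp t in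
  let P := 1 - E^2 + a^2 * E^2 in
  let Q := -2 * a * E^2 in
  let Dn := (E + 1)^2 + a^2 * E^2 in
  Cmod (gammaH beta a t) ^ 2 = (P^2 + Q^2) / Dn^2.
Proof.
  intros E P Q Dn.
  rewrite Cmod_sq, gamma_explicit. fold E P Q Dn. simpl fst; simpl snd.
  assert (hE : 0 < E) by apply exp_pos.
  assert (hD : 0 < Dn) by (unfold Dn; nra).
  transitivity ((cos beta ^ 2 + sin beta ^ 2) * (P^2 + Q^2) / Dn^2).
  - field. lra.
  - replace (cos beta ^ 2 + sin beta ^ 2) with 1. field; lra.
    rewrite <- (sin2_cos2 beta). unfold Rsqr. ring.
Qed.

Definition KK (a : R) := 1 + a ^ 2.
Definition cc (a : R) := cos (atan a).
Definition phiE (a t : R) := cc a * (KK a * exp t ^ 2 - 1) / (KK a * exp t ^ 2 + 1).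
Definition Xf (a t : R) := 2 * exp t / (KK a * exp t ^ 2 + 1).

Lemma cc_pos a : 0 < cc a.
Proof. unfold cc. rewrite cos_atan. apply Rdiv_lt_0_compat; [lra|]. apply sqrt_lt_R0. unfold Rsqr; nra. Qed.

Lemma cc2 a : cc a * cc a = / KK a.
Proof.
  unfold cc, KK. rewrite cos_atan.
  assert (h : 0 < 1 + a²) by (unfold Rsqr; nra).
  assert (h2 := sqrt_lt_R0 _ h).
  assert (h3 := sqrt_sqrt _ (Rlt_le _ _ h)).
  replace (1 + a^2) with (1 + a²) by (unfold Rsqr; ring).
  rewrite <- h3 at 3. field. lra.
Qed.

Lemma sin_atan_cc a : sin (atan a) = a * cc a.
Proof. unfold cc. rewrite sin_atan, cos_atan. field. apply Rgt_not_eq, sqrt_lt_R0. unfold Rsqr; nra. Qed.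

Lemma lineE_explicit beta a u :
  lineE beta (atan a) u =
  (- (cos beta * cc a - sin beta * (a * cc a)) * u + (sin beta * cc a + cos beta * (a * cc a)) * (a * cc a),
   - (sin beta * cc a + cos beta * (a * cc a)) * u - (cos beta * cc a - sin beta * (a * cc a)) * (a * cc a)).
Proof.
  unfold lineE, cis, Cmult. simpl.
  rewrite neg_cos, neg_sin, cos_plus, sin_plus, sin_atan_cc. fold (cc a).
  f_equal; ring.
Qed.

Lemma Phi_gamma beta a t : Phi (gammaH beta a t) = lineE beta (atan a) (phiE a t).
Proof.
  rewrite lineE_explicit.
  unfold Phi. rewrite gamma_mod2, gamma_explicit.
  unfold phiE.
  set (c := cc a). assert (hc2 : c * c = / KK a) by apply cc2.
  set (E := exp t). assert (hE : 0 < E) by apply exp_pos.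
  unfold Cmult, RtoC. simpl.
  assert (hK : 0 < KK a) by (unfold KK; nra).
  f_equal.
  - transitivity (c * c * (-(cos beta - sin beta * a) * ((KK a * E ^ 2 - 1) / (KK a * E ^ 2 + 1)) + (sin beta + cos beta * a) * a)); [| field; nra].
    rewrite hc2. unfold KK. field. split; nra.
  - transitivity (c * c * (-(sin beta + cos beta * a) * ((KK a * E ^ 2 - 1) / (KK a * E ^ 2 + 1)) - (cos beta - sin beta * a) * a)); [| field; nra].
    rewrite hc2. unfold KK. field. split; nra.
Qed.

Lemma xfun_gamma beta a t : xfun (gammaH beta a t) = Xf a t.
Proof.
  unfold xfun, Xf. rewrite gamma_mod2. unfold KK.
  set (E := exp t). assert (hE : 0 < E) by apply exp_pos.
  field. split; nra.
Qed.

Lemma dfun_line beta a u : dfun (lineE beta (atan a) u) = cc a ^ 2 - u ^ 2.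
Proof.
  unfold dfun. rewrite Cmod_sq, lineE_explicit. simpl fst; simpl snd.
  set (c := cc a). assert (hc2 : c * c = / KK a) by apply cc2.
  transitivity (1 - (cos beta ^ 2 + sin beta ^ 2) * (c * c * (1 + a^2)) * (u^2 + c * c * a^2)); [ring|].
  replace (cos beta ^ 2 + sin beta ^ 2) with 1 by (rewrite <- (sin2_cos2 beta); unfold Rsqr; ring).
  replace (c ^ 2) with (c * c) by ring.
  rewrite hc2. unfold KK. field. nra.
Qed.


Definition dphiE (a t : R) := cc a * (4 * KK a * exp t ^ 2) / (KK a * exp t ^ 2 + 1) ^ 2.
Definition psiE (a u : R) := ln ((cc a + u) / ((cc a - u) * KK a)) / 2.

Lemma KK_pos a : 0 < KK a.
Proof. unfold KK; nra. Qed.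
Lemma KK_ge1 a : 1 <= KK a.
Proof. unfold KK; nra. Qed.

Lemma phi_deriv a t : is_derive (phiE a) t (dphiE a t).
Proof.
  unfold phiE, dphiE. assert (hK := KK_pos a). assert (hE := exp_pos t).
  auto_derive. nra. field. nra.
Qed.

Lemma dphi_cont a t : continuous (dphiE a) t.
Proof.
  apply (@ex_derive_continuous R_AbsRing R_NormedModule). unfold dphiE. assert (hK := KK_pos a). assert (hE := exp_pos t).
  auto_derive. nra.
Qed.

Lemma Xf_pos a t : 0 < Xf a t.
Proof. unfold Xf. assert (hK := KK_pos a). assert (hE := exp_pos t).
  apply Rdiv_lt_0_compat; nra. Qed.

Lemma phi_sq a t : cc a ^ 2 - phiE a t ^ 2 = Xf a t ^ 2.
Proof.
  unfold phiE, Xf. assert (hK := KK_pos a). assert (hE := exp_pos t).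
  assert (h2 := cc2 a).
  transitivity (cc a * cc a * (4 * KK a * exp t ^ 2) / (KK a * exp t ^ 2 + 1)^2); [field; nra|].
  rewrite h2. field. split; nra.
Qed.

Lemma dphi_X a t : cc a * dphiE a t = Xf a t ^ 2.
Proof.
  unfold dphiE, Xf. assert (hK := KK_pos a). assert (hE := exp_pos t).
  assert (h2 := cc2 a).
  transitivity (cc a * cc a * (4 * KK a * exp t ^ 2) / (KK a * exp t ^ 2 + 1)^2); [field; nra|].
  rewrite h2. field. split; nra.
Qed.

Lemma phi_range a t : - cc a < phiE a t < cc a.
Proof.
  unfold phiE. assert (hK := KK_pos a). assert (hE := exp_pos t). assert (hc := cc_pos a).
  assert (h1 : 0 < KK a * exp t ^ 2) by (apply Rmult_lt_0_compat; [lra| apply pow_lt; lra]).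
  split.
  - apply Rlt_div_r; [lra|]. nra.
  - apply Rlt_div_l; [lra|]. nra.
Qed.

Lemma phi_psi a u : - cc a < u < cc a -> phiE a (psiE a u) = u.
Proof.
  intros hu. unfold phiE, psiE. assert (hK := KK_pos a). assert (hc := cc_pos a).
  set (z := (cc a + u) / ((cc a - u) * KK a)).
  assert (hz : 0 < z) by (unfold z; apply Rdiv_lt_0_compat; nra).
  assert (hE : exp (ln z / 2) ^ 2 = z).
  { simpl. rewrite Rmult_1_r, <- exp_plus. replace (ln z / 2 + ln z / 2) with (ln z) by field.
    apply exp_ln; auto. }
  rewrite hE. unfold z. field. split; [|split]; nra.
Qed.

Lemma ball_R (x e y : R) : ball x e y -> x - e < y < x + e.
Proof.
  unfold ball; simpl; unfold AbsRing_ball, abs, minus, plus, opp; simpl.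
  intros h. apply Rabs_lt_between' in h. lra.
Qed.

Lemma psi_lim_left a : filterlim (psiE a) (at_right (- cc a)) (Rbar_locally m_infty).
Proof.
  intros Q [M hM]. assert (hK := KK_pos a). assert (hc := cc_pos a).
  assert (hK1 := KK_ge1 a).
  assert (hd : 0 < Rmin (cc a) (exp (2 * M) * cc a * KK a)).
  { apply Rmin_glb_lt; auto. assert (hx := exp_pos (2*M)). apply Rmult_lt_0_compat; [|lra]. nra. }
  exists (mkposreal _ hd). intros u hu hu'. simpl in hu. apply ball_R in hu.
  assert (h1 := Rmin_l (cc a) (exp (2 * M) * cc a * KK a)).
  assert (h2 := Rmin_r (cc a) (exp (2 * M) * cc a * KK a)).
  apply hM. unfold psiE.
  assert (hx := exp_pos (2*M)).
  assert (hz : (cc a + u) / ((cc a - u) * KK a) < exp (2 * M)).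
  { apply Rlt_div_l; [nra|]. nra. }
  assert (ln ((cc a + u) / ((cc a - u) * KK a)) < 2 * M).
  { rewrite <- (ln_exp (2 * M)). apply ln_increasing; auto. apply Rdiv_lt_0_compat; nra. }
  lra.
Qed.

Lemma psi_lim_right a : filterlim (psiE a) (at_left (cc a)) (Rbar_locally p_infty).
Proof.
  intros Q [M hM]. assert (hK := KK_pos a). assert (hc := cc_pos a).
  assert (hK1 := KK_ge1 a).
  assert (hx := exp_pos (2*M)).
  assert (hd : 0 < Rmin (cc a) (cc a / (exp (2 * M) * KK a))).
  { apply Rmin_glb_lt; auto. apply Rdiv_lt_0_compat; nra. }
  exists (mkposreal _ hd). intros u hu hu'. simpl in hu. apply ball_R in hu.
  assert (h1 := Rmin_l (cc a) (cc a / (exp (2 * M) * KK a))).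
  assert (h2 := Rmin_r (cc a) (cc a / (exp (2 * M) * KK a))).
  apply hM. unfold psiE.
  assert (h3 : (cc a - u) * (exp (2 * M) * KK a) < cc a).
  { assert (cc a - u < cc a / (exp (2 * M) * KK a)) by lra.
    apply Rlt_div_r in H; [|nra]. lra. }
  assert (hz : exp (2 * M) < (cc a + u) / ((cc a - u) * KK a)).
  { apply Rlt_div_r; [nra|]. nra. }
  assert (2 * M < ln ((cc a + u) / ((cc a - u) * KK a))).
  { rewrite <- (ln_exp (2 * M)). apply ln_increasing; auto. }
  lra.
Qed.


Lemma cont_pair {T : UniformSpace} (u v : T -> R) (x : T) :
  continuous u x -> continuous v x -> @continuous T C_UniformSpace (fun t => (u t, v t)) x.
Proof.
  intros hu hv.
  apply (continuous_comp_2 u v (fun p q => (p, q) : C)); auto.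
  eapply filterlim_ext; [| apply filterlim_id]. intros [p q]; reflexivity.
Qed.

Lemma f_cont (f : C -> C) : smooth_closed_disk f -> forall z, Cmod z <= 1 -> continuous f z.
Proof.
  intros [U [hU [hin [h1 h2]]]] z hz.
  specialize (h1 0%nat). specialize (h2 0%nat). simpl in h1, h2.
  eapply filterlim_ext; [| apply (cont_pair (fun w => fst (f w)) (fun w => snd (f w)))].
  - intros w. simpl. destruct (f w); reflexivity.
  - apply h1, hin, hz.
  - apply h2, hin, hz.
Qed.

Lemma lineE_cont beta a u : continuous (lineE beta (atan a)) u.
Proof.
  set (A := cos beta * cc a - sin beta * (a * cc a)).
  set (B := sin beta * cc a + cos beta * (a * cc a)).
  replace (lineE beta (atan a)) with (fun x => (- A * x + B * (a * cc a), - B * x - A * (a * cc a)) : C).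
  2:{ extensionality x. rewrite lineE_explicit. reflexivity. }
  apply cont_pair; apply (@ex_derive_continuous R_AbsRing R_NormedModule); auto_derive; auto.
Qed.

Lemma lineE_in_disk beta a u : - cc a <= u <= cc a -> Cmod (lineE beta (atan a) u) <= 1.
Proof.
  intros hu. assert (h := dfun_line beta a u). unfold dfun in h.
  assert (hc := cc_pos a).
  assert (Cmod (lineE beta (atan a) u) ^ 2 <= 1) by nra.
  assert (h0 := Cmod_ge_0 (lineE beta (atan a) u)). nra.
Qed.

Lemma F0_cont f beta a : smooth_closed_disk f ->
  forall u, - cc a <= u <= cc a -> continuous (fun u => f (lineE beta (atan a) u)) u.
Proof.
  intros hf u hu. apply continuous_comp; [apply lineE_cont|].
  apply f_cont; auto. apply lineE_in_disk; auto.
Qed.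

Lemma Rpower_cont (r : R -> R) (y : R) x : (forall x, ex_derive r x) -> 0 < r x ->
  continuous (fun t => Rpower (r t) y) x.
Proof.
  intros hd hr. apply (@ex_derive_continuous R_AbsRing R_NormedModule).
  unfold Rpower. auto_derive; repeat split; auto.
Qed.


Lemma exp_le_exp' x y : x <= y -> exp x <= exp y.
Proof. intros [h|h]; [left; apply exp_increasing; auto| right; subst; auto]. Qed.

Lemma Xf_bound a t p : 0 < p ->
  Rpower (Xf a t) p <= Rpower 2 p * (4 * exp (- (p * t)) / (1 + exp (- (p * t))) ^ 2).
Proof.
  intros hp. assert (hX := Xf_pos a t). assert (hK := KK_ge1 a). assert (hy := exp_pos t).
  set (q := exp (- (p * t))). assert (hq : 0 < q) by apply exp_pos.
  unfold Rpower.
  destruct (Rle_or_lt 0 t) as [ht|ht].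
  - assert (hXb : Xf a t <= 2 * exp (- t)).
    { unfold Xf. rewrite exp_Ropp. apply Rle_div_l. nra.
      apply Rmult_le_reg_r with (exp t); auto. field_simplify; try lra. nra. }
    assert (hl : ln (Xf a t) <= ln 2 + - t).
    { replace (ln 2 + - t) with (ln 2 + ln (exp (- t))) by (rewrite ln_exp; ring). rewrite <- ln_mult; [|lra|apply exp_pos]. apply ln_le; auto. }
    assert (hq1 : q <= 1). { unfold q. rewrite <- exp_0. apply exp_le_exp'. nra. }
    apply Rle_trans with (exp (p * ln 2) * q).
    + unfold q. rewrite <- exp_plus. apply exp_le_exp'. nra.
    + apply Rmult_le_compat_l; [left; apply exp_pos|].
      apply Rle_div_r; [nra|]. nra.
  - assert (hXb : Xf a t <= 2 * exp t).
    { unfold Xf. apply Rle_div_l; [nra|]. assert (0 < KK a * exp t ^ 2) by (apply Rmult_lt_0_compat; [lra|apply pow_lt; lra]). nra. }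
    assert (hl : ln (Xf a t) <= ln 2 + t).
    { replace (ln 2 + t) with (ln 2 + ln (exp t)) by (rewrite ln_exp; ring). rewrite <- ln_mult; [|lra|apply exp_pos]. apply ln_le; auto. }
    assert (hq1 : 1 <= q). { unfold q. rewrite <- exp_0. apply exp_le_exp'. nra. }
    assert (hqe : exp (p * t) = / q) by (unfold q; rewrite exp_Ropp, Rinv_inv; reflexivity).
    apply Rle_trans with (exp (p * ln 2) * exp (p * t)).
    + rewrite <- exp_plus. apply exp_le_exp'. nra.
    + apply Rmult_le_compat_l; [left; apply exp_pos|]. rewrite hqe.
      apply Rle_div_r; [nra|]. apply Rmult_le_reg_r with q; auto. field_simplify; nra.
Qed.

Lemma ball_R_intro (x y : R) (e : R) : Rabs (y - x) < e -> ball x e y.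
Proof. unfold ball; simpl; unfold AbsRing_ball, abs, minus, plus, opp; simpl. auto. Qed.

Definition Hf (k p t : R) := k / (1 + exp (- (p * t))).
Definition dHf (k p t : R) := k * (p * exp (- (p * t)) / (1 + exp (- (p * t))) ^ 2).

Lemma Hf_deriv k p t : is_derive (Hf k p) t (dHf k p t).
Proof.
  unfold Hf, dHf. assert (h := exp_pos (- (p * t))).
  auto_derive. lra. field. lra.
Qed.

Lemma dHf_cont k p t : continuous (dHf k p) t.
Proof.
  apply (@ex_derive_continuous R_AbsRing R_NormedModule). unfold dHf.
  assert (h := exp_pos (- (p * t))). auto_derive. apply Rgt_not_eq. nra.
Qed.

Lemma Hf_lim_p k p : 0 < p -> filterlim (Hf k p) (Rbar_locally p_infty) (locally k).
Proof.
  intros hp P [eps heps].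
  assert (he : 0 < eps / (Rabs k + 1)) by (apply Rdiv_lt_0_compat; [apply cond_pos| assert (h:=Rabs_pos k); lra]).
  exists (- ln (eps / (Rabs k + 1)) / p). intros t ht. apply heps. apply ball_R_intro.
  unfold Hf. set (q := exp (- (p * t))). assert (hq : 0 < q) by apply exp_pos.
  assert (hq2 : q < eps / (Rabs k + 1)).
  { unfold q. rewrite <- (exp_ln _ he). apply exp_increasing.
    apply (Rmult_lt_compat_l p) in ht; auto.
    replace (p * (- ln (eps / (Rabs k + 1)) / p)) with (- ln (eps / (Rabs k + 1))) in ht by (field; lra). lra. }
  replace (k / (1 + q) - k) with (- (k * q / (1 + q))) by (field; lra).
  rewrite Rabs_Ropp. unfold Rdiv. rewrite Rabs_mult, Rabs_mult, (Rabs_right q) by lra.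
  rewrite (Rabs_right (/ (1 + q))) by (left; apply Rinv_0_lt_compat; lra).
  assert (hk := Rabs_pos k).
  apply Rle_lt_trans with (Rabs k * q).
  - rewrite Rmult_assoc. apply Rmult_le_compat_l; auto.
    apply Rmult_le_reg_r with (1 + q); [lra|]. rewrite Rmult_assoc, Rinv_l, Rmult_1_r by lra. nra.
  - apply Rlt_div_r in hq2; [|lra]. destruct eps as [e hpe]. simpl in *. nra.
Qed.

Lemma Hf_lim_m k p : 0 < p -> filterlim (Hf k p) (Rbar_locally m_infty) (locally 0).
Proof.
  intros hp P [eps heps].
  assert (hk := Rabs_pos k).
  assert (he : 0 < (Rabs k + 1) / eps) by (apply Rdiv_lt_0_compat; [lra|apply cond_pos]).
  exists (- ln ((Rabs k + 1) / eps) / p). intros t ht. apply heps. apply ball_R_intro.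
  unfold Hf. set (q := exp (- (p * t))). assert (hq : 0 < q) by apply exp_pos.
  assert (hq2 : (Rabs k + 1) / eps < q).
  { unfold q. rewrite <- (exp_ln _ he). apply exp_increasing.
    apply (Rmult_lt_compat_l p) in ht; auto.
    replace (p * (- ln ((Rabs k + 1) / eps) / p)) with (- ln ((Rabs k + 1) / eps)) in ht by (field; lra). lra. }
  rewrite Rminus_0_r. unfold Rdiv. rewrite Rabs_mult.
  rewrite (Rabs_right (/ (1 + q))) by (left; apply Rinv_0_lt_compat; lra).
  destruct eps as [e hpe]. simpl in *.
  apply Rlt_div_l in hq2; [|lra].
  apply Rmult_lt_reg_r with (1 + q); [lra|]. rewrite Rmult_assoc, Rinv_l, Rmult_1_r by lra. nra.
Qed.


Lemma scal_C (r : R) (z : C) : scal r z = Cmult (RtoC r) z.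
Proof. destruct z as [x y]. unfold Cmult, RtoC; simpl. unfold scal; simpl. unfold prod_scal; simpl.
  unfold scal; simpl. unfold mult; simpl. f_equal; ring. Qed.

Lemma Cmod_scal (r : R) (z : C) : Cmod (scal r z) = Rabs r * Cmod z.
Proof. rewrite scal_C, Cmod_mult, Cmod_R. reflexivity. Qed.

Lemma Rpower_sq (X g : R) : 0 < X -> Rpower (X ^ 2) g * X ^ 2 = Rpower X (2 + 2 * g).
Proof.
  intros hX. unfold Rpower. rewrite ln_pow by auto.
  assert (e : X ^ 2 = exp (2 * ln X)).
  { replace (2 * ln X) with (ln X + ln X) by ring. rewrite exp_plus, exp_ln by auto. ring. }
  rewrite e, <- exp_plus. f_equal. simpl. ring.
Qed.

Lemma cancel_c (c : R) (z : C) : 0 < c -> Cmult (RtoC c) (scal (/ c) z) = z.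
Proof. intros hc. rewrite scal_C. destruct z as [x y]. unfold Cmult, RtoC; simpl. f_equal; field; lra. Qed.

Lemma muH_cc a : muH a = cc a.
Proof. unfold muH, cc. rewrite cos_atan. unfold Rsqr. replace (a^2) with (a*a) by ring. field.
  apply Rgt_not_eq, sqrt_lt_R0. nra. Qed.

Theorem theorem3p13 (gam : R) (hgam : -1 < gam) (f : C -> C)
  (hf : smooth_closed_disk f) (beta a : R) :
  exists L : C,
    is_I0E (fun z => Cmult (RtoC (Rpower (dfun z) gam)) (f z)) beta (atan a) L /\
    is_I0H (fun z => Cmult (RtoC (Rpower (xfun z) (2 + 2 * gam))) (f (Phi z)))
      beta a (Cmult (RtoC (muH a)) L).
Proof.
  set (c := cc a). assert (hc := cc_pos a). fold c in hc.
  set (p := 2 + 2 * gam). assert (hp : 0 < p) by (unfold p; lra).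
  set (F0 := fun u => f (lineE beta (atan a) u)).
  assert (hF0 : forall u, - c <= u <= c -> continuous F0 u) by (intros; apply F0_cont; auto).
  destruct (@bounded_continuity R_AbsRing C_R_NormedModule F0 (- c) c hF0) as [M hM].
  assert (hM' : forall u, - c <= u <= c -> Cmod (F0 u) <= M).
  { intros u hu. rewrite Cmod_norm. left. apply hM; auto. }
  assert (hM0 : 0 <= M) by (eapply Rle_trans; [apply Cmod_ge_0| apply (hM' 0)]; lra).
  set (k := 4 * M * Rpower 2 p / p).
  set (h := fun t => scal (Rpower (Xf a t) p) (F0 (phiE a t))).
  assert (hphic : forall t, continuous (phiE a) t).
  { intros t. apply (@ex_derive_continuous R_AbsRing R_NormedModule). eexists. apply phi_deriv. }
  assert (hex : exists Lh, is_RInt_gen h (Rbar_locally m_infty) (Rbar_locally p_infty) Lh).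
  { apply (ex_gen_dom h (Hf k p) (dHf k p) 0 k).
    - intros t. unfold h. apply (@continuous_scal R_UniformSpace R_AbsRing C_R_NormedModule).
      + apply Rpower_cont; [| apply Xf_pos]. intros x. unfold Xf. assert (hK := KK_pos a).
        auto_derive. assert (hE := exp_pos x). nra.
      + apply continuous_comp; auto. apply hF0. pose proof (phi_range a t). fold c in H. lra.
    - apply Hf_deriv.
    - apply dHf_cont.
    - intros t. unfold h. rewrite Cmod_scal. rewrite Rabs_right by (left; apply exp_pos).
      assert (hb := Xf_bound a t p hp).
      assert (hr := phi_range a t). fold c in hr.
      assert (hF := hM' (phiE a t) ltac:(lra)).
      apply Rle_trans with (Rpower (Xf a t) p * M).
      + apply Rmult_le_compat_l; auto. left; apply exp_pos.
      + unfold dHf, k. set (q := exp (- (p * t))). fold q in hb.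
        assert (hq : 0 < q) by apply exp_pos.
        apply Rle_trans with (M * (Rpower 2 p * (4 * q / (1 + q) ^ 2))); [nra|].
        right. field. split; lra.
    - apply Hf_lim_m; auto.
    - apply Hf_lim_p; auto. }
  destruct hex as [Lh hLh].
  set (g := fun u => scal (Rpower (c ^ 2 - u ^ 2) gam) (F0 u)).
  assert (key : forall t, scal (/ c) (h t) = scal (dphiE a t) (g (phiE a t))).
  { intros t. unfold h, g. rewrite !scal_C. unfold c. rewrite phi_sq.
    assert (hX := Xf_pos a t).
    assert (hd : dphiE a t = Xf a t ^ 2 / cc a) by (rewrite <- dphi_X; field; apply Rgt_not_eq, cc_pos).
    rewrite hd. unfold p. rewrite <- (Rpower_sq _ gam hX).
    destruct (F0 (phiE a t)) as [z1 z2]. unfold Cmult, RtoC; simpl. f_equal; field; apply Rgt_not_eq, cc_pos. }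
  assert (hI2 : is_RInt_gen (fun t => scal (dphiE a t) (g (phiE a t)))
                  (Rbar_locally m_infty) (Rbar_locally p_infty) (scal (/ c) Lh)).
  { assert (hs := @is_RInt_gen_scal C_R_NormedModule _ _ _ _ h (/ c) Lh hLh).
    refine (@is_RInt_gen_ext C_R_NormedModule _ _ _ _ _ _ _ _ hs).
    apply filter_forall. intros [x y] z _. apply key. }
  assert (hE : is_RInt_gen g (at_right (- c)) (at_left c) (scal (/ c) Lh)).
  { apply (cv_gen g (phiE a) (dphiE a) (psiE a)); auto.
    - lra.
    - intros u hu. unfold g. apply (@continuous_scal R_UniformSpace R_AbsRing C_R_NormedModule).
      + apply Rpower_cont; [intros x; auto_derive; auto|]. nra.
      + apply hF0; lra.
    - apply phi_deriv.
    - apply dphi_cont.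
    - apply phi_range.
    - apply phi_psi.
    - apply psi_lim_left.
    - apply psi_lim_right. }
  exists (scal (/ c) Lh). split.
  - unfold is_I0E.
    refine (@is_RInt_gen_ext C_R_NormedModule _ _ _ _ g _ _ _ hE).
    apply filter_forall. intros [x y] u _.
    unfold g, F0. rewrite scal_C, dfun_line. reflexivity.
  - unfold is_I0H.
    replace (Cmult (RtoC (muH a)) (scal (/ c) Lh)) with Lh.
    + refine (@is_RInt_gen_ext C_R_NormedModule _ _ _ _ h _ _ _ hLh).
      apply filter_forall. intros [x y] t _.
      unfold h, F0. rewrite scal_C, xfun_gamma, Phi_gamma. reflexivity.
    + rewrite muH_cc. fold c. symmetry. apply cancel_c; auto.
Qed.
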